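(* Consider long-range first-passage percolation on $\mathbb{Z}^d$ (setting in the context) with $r(k)=k^{-\alpha}$, $k\ge1$, where $\alpha>2d+1$. Let $\theta\in(0,1)$ and $c_1,c_2>0$. Then there is a constant $C>0$ such that for all $n\ge1$, $$\mathbb{P}\big(W_{\langle zw\rangle}\ge c_1n\text{ for all }z\in B(0,c_2n)\text{ and }w\notin B(z,n^\theta)\big)\ge1-Cn^{d+1-\theta(\alpha-d)}.$$
   Context: Let $d\ge1$, $\|x\|_1=\sum_i|x_i|$, $\|x\|_\infty=\max_i|x_i|$, and $B(u,s)=\{x\in\mathbb{Z}^d:\|x-u\|_\infty\le s\}$. Let $\mathcal{E}$ be the set of unordered pairs $e=\langle xy\rangle$ of distinct points of $\mathbb{Z}^d$, with length $\|e\|_1=\|x-y\|_1$. Let $(\omega_e)$ be i.i.d. mean-one exponential random variables and $W_e=\omega_e/r(\|e\|_1)$. *)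

(* Defs.v *)
From HB Require Import structures.
From mathcomp Require Import all_boot all_order all_algebra.
From mathcomp Require Import all_classical all_reals all_analysis.
Set Implicit Arguments. Unset Strict Implicit. Unset Printing Implicit Defensive.
Import Order.TTheory GRing.Theory Num.Theory.
Local Open Scope classical_set_scope.
Local Open Scope ring_scope.

Definition Zd (d : nat) := 'I_d -> int.

Definition l1dist {R : realType} {d : nat} (x y : Zd d) : R :=
  (\sum_(i < d) `|x i - y i|)%:~R.

Definition linfdist {d : nat} (x y : Zd d) : int :=
  \big[Num.max/0]_(i < d) `|x i - y i|.

Definition inB {R : realType} {d : nat} (u : Zd d) (s : R) (x : Zd d) : Prop :=
  (linfdist x u)%:~R <= s.

Definition same_edge {d : nat} (e e' : Zd d * Zd d) : Prop :=
  (e.1 = e'.1 /\ e.2 = e'.2) \/ (e.1 = e'.2 /\ e.2 = e'.1).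

(* omega : a family indexed by unordered pairs <x y> of distinct points,
   represented as a symmetric function of ordered pairs; the (omega_e) are
   i.i.d. mean-one exponential random variables on the probability space P. *)
Definition iid_exp1_edges {R : realType} {dT : measure_display}
  {T : measurableType dT} (P : probability T R) {d : nat}
  (omega : Zd d -> Zd d -> T -> R) : Prop :=
  [/\ (forall x y, omega x y = omega y x),
      (forall x y, x <> y -> measurable_fun setT (omega x y)),
      (forall x y, x <> y -> forall A : set R, measurable A ->
          P (omega x y @^-1` A) = exponential_prob 1 A) &
      (forall (m : nat) (e : 'I_m -> Zd d * Zd d),
          (forall i, (e i).1 <> (e i).2) ->
          (forall i j, i <> j -> ~ same_edge (e i) (e j)) ->
          forall A : 'I_m -> set R, (forall i, measurable (A i)) ->
          P (\bigcap_(i in [set: 'I_m]) (omega (e i).1 (e i).2 @^-1` A i)) =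
          (\prod_(i < m) P (omega (e i).1 (e i).2 @^-1` A i))%E)].

Definition rpow {R : realType} (alpha k : R) : R := k `^ (- alpha).

Definition Wgt {R : realType} {T : Type} {d : nat} (alpha : R)
  (omega : Zd d -> Zd d -> T -> R) (x y : Zd d) (t : T) : R :=
  omega x y t / rpow alpha (l1dist x y).

Definition zeroZd (d : nat) : Zd d := fun _ => 0.

(* Main.v *)
Require Import Defs.
From HB Require Import structures.
From mathcomp Require Import all_boot all_order all_algebra.
From mathcomp Require Import all_classical all_reals all_analysis.
From mathcomp Require Import measurable_realfun.
From mathcomp Require Import zify ring lra.
Import Order.TTheory GRing.Theory Num.Theory.
Local Open Scope classical_set_scope.
Local Open Scope ring_scope.

Set Implicit Arguments. Unset Strict Implicit. Unset Printing Implicit Defensive.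


Lemma expo_le (R : realType) (a : R) : 0 < a ->
  (exponential_prob (1:R) `]-oo, a] <= a%:E)%E.
Proof.
move=> a0.
rewrite /exponential_prob (@itv_bndbnd_setU _ _ _ (BLeft 0)) //; last first.
  by rewrite bnd_simp ltW.
rewrite ge0_integral_setU //=.
- rewrite integral0_eq /=; last first.
    by move=> x /=; rewrite in_itv /= => x0; rewrite lt0_exponential_pdf.
  rewrite add0e.
  have := @exponential_prob_itv0c R 1 a a0; rewrite /exponential_prob => ->.
  rewrite -EFinB lee_fin ?mulN1r ?mulNr ?mul1r; have := expR_ge1Dx (- a); lra.
- apply/measurable_EFinP; apply: measurable_funTS.
  exact: measurable_exponential_pdf.
- by move=> x _; rewrite lee_fin exponential_pdf_ge0.
- apply/disj_setPS => x [] /=; rewrite !in_itv /= => x0 /andP[]; lra.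
Qed.


Lemma tail_sum (R : realType) (j : nat) : (0 < j)%N -> forall M,
  \sum_(k < M) (if (j < k)%N then ((k%:R : R) ^+ 2)^-1 else 0) <= j%:R^-1.
Proof.
move=> j0 M.
suff : \sum_(k < M) (if (j < k)%N then ((k%:R : R) ^+ 2)^-1 else 0)
        + ((maxn j M.-1)%:R)^-1 <= j%:R^-1.
  have : 0 <= ((maxn j M.-1)%:R : R)^-1 by rewrite invr_ge0.
  lra.
elim: M => [|M IH].
  by rewrite big_ord0 add0r /= (maxn_idPl (leq0n j)).
rewrite big_ord_recr /=.
case: (leqP M j) => hMj.
  rewrite addr0.
  by move: IH; rewrite (maxn_idPl (leq_trans (leq_pred M) hMj)).
move: IH; have -> : maxn j M.-1 = M.-1 by apply/maxn_idPr; lia.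
have hM1 : (0 < M.-1)%N by lia.
have e : (M%:R : R) = M.-1%:R + 1 by rewrite natr1 prednK //; lia.
have p : (0 : R) < M.-1%:R by rewrite ltr0n.
suff : ((M%:R : R) ^+ 2)^-1 + M%:R^-1 <= M.-1%:R^-1 by lra.
rewrite e.
set x := (M.-1%:R : R) in p *.
have -> : ((x + 1) ^+ 2)^-1 + (x + 1)^-1 = (x + 2) / (x + 1) ^+ 2.
  by field; apply/lt0r_neq0; lra.
rewrite ler_pdivrMr; last by apply: exprn_gt0; lra.
rewrite mulrC -/(_ / x) ler_pdivlMr //.
nra.
Qed.


Lemma powN_anti (R : realType) (del a b : R) : 0 <= del -> 0 < a -> a <= b ->
  b `^ (- del) <= a `^ (- del).
Proof.
move=> d0 a0 ab; rewrite !powRN lef_pV2 ?posrE ?powR_gt0 //; try lra.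
by apply: ge0_ler_powR => //; rewrite nnegrE; lra.
Qed.

Lemma term_bound (R : realType) (alpha m : R) (d' k : nat) : 0 < m ->
  m < k%:R -> d'%:R + 2 <= alpha ->
  (2 * k + 1)%:R ^+ d' * k%:R `^ (- alpha) <=
    3 ^+ d' * m `^ (d'%:R + 2 - alpha) * ((k%:R : R) ^+ 2)^-1.
Proof.
move=> m0 mk ha.
have k0 : (0 : R) < k%:R by lra.
have e1 : (2 * k + 1)%:R ^+ d' <= (3 : R) ^+ d' * k%:R ^+ d'.
  rewrite -exprMn; apply: lerXn2r; rewrite ?nnegrE; try lra.
  rewrite natrD natrM; have : (1 : R) <= k%:R.
    by rewrite ler1n -(ltr0n R).
  lra.
have e2 : (k%:R : R) ^+ d' * k%:R `^ (- alpha) =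
   k%:R `^ (d'%:R + 2 - alpha) * ((k%:R : R) ^+ 2)^-1.
  rewrite -!powR_mulrn ?ltW // -powRN -!powRD; try by apply/implyP => _; lra.
  by congr (_ `^ _); ring.
apply: (le_trans (ler_wpM2r (powR_ge0 _ _) e1)).
rewrite -[X in X <= _]mulrA e2 [X in X <= _]mulrA.
apply: ler_wpM2r; first by rewrite invr_ge0 exprn_ge0 // ltW.
apply: ler_wpM2l; first by rewrite exprn_ge0.
rewrite (_ : d'%:R + 2 - alpha = - (alpha - d'%:R - 2)); last by ring.
apply: powN_anti; lra.
Qed.


Lemma linf_ge d (x u : Zd d) j : `|x j - u j| <= linfdist x u.
Proof. rewrite /linfdist; exact: (le_bigmax _ _ j). Qed.

Lemma linf_le d (x u : Zd d) (b : int) : 0 <= b ->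
  (forall j, `|x j - u j| <= b) -> linfdist x u <= b.
Proof. by move=> b0 h; rewrite /linfdist; apply: bigmax_le. Qed.

Lemma linf_ge0 d (x u : Zd d) : 0 <= linfdist x u.
Proof. rewrite /linfdist; elim/big_ind: _ => //= a b; rewrite le_max => -> //. Qed.

Lemma linf_attain d' (x u : Zd d'.+1) : exists j, linfdist x u = `|x j - u j|.
Proof.
rewrite /linfdist (bigmax_eq_arg _ ord0) //; first by eexists.
Qed.

Definition zof d K (zu : {ffun 'I_d -> 'I_(2*K).+1}) : Zd d :=
  fun j => (zu j)%:Z - K%:Z.
Definition vof d' k (i : 'I_d'.+1) (s : bool) (u : {ffun 'I_d' -> 'I_(2*k).+1})
  : Zd d'.+1 := fun j => match unlift i j with
     | Some j' => (u j')%:Z - k%:Z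
     | None => if s then k%:Z else - k%:Z end.
Definition addZ d (z v : Zd d) : Zd d := fun j => z j + v j.
Definition Ik d' K k := ({ffun 'I_d'.+1 -> 'I_(2*K).+1} *
   ('I_d'.+1 * bool * {ffun 'I_d' -> 'I_(2*k).+1}))%type.
Definition pt d' K k (x : Ik d' K k) : Zd d'.+1 * Zd d'.+1 :=
  (zof x.1, addZ (zof x.1) (vof x.2.1.1 x.2.1.2 x.2.2)).

Lemma vof_le d' k i s u j : `|@vof d' k i s u j| <= k%:Z.
Proof.
rewrite /vof; case: (unlift i j) => [j'|].
  have := ltn_ord (u j'); set a := nat_of_ord (u j'); lia.
case: s; lia.
Qed.

Lemma vof_i d' k i s u : `|@vof d' k i s u i| = k%:Z.
Proof. rewrite /vof unlift_none; case: s; lia. Qed.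

Lemma card_Ik d' K k : #|{: Ik d' K k}| = ((2*K).+1 ^ d'.+1 * (d'.+1 * 2 * (2*k).+1 ^ d'))%N.
Proof. by rewrite !card_prod !card_ffun !card_ord card_bool. Qed.

Lemma cover_pt d' K (z w : Zd d'.+1) : (forall j, `|z j| <= K%:Z) ->
  exists k, exists x : Ik d' K k, pt x = (z, w) /\ k%:Z = linfdist w z.
Proof.
move=> hz.
have [i hi] := linf_attain w z.
have l0 := linf_ge0 w z.
set k := absz (linfdist w z).
have ek : k%:Z = linfdist w z by rewrite /k; lia.
pose zu : {ffun 'I_d'.+1 -> 'I_(2*K).+1} := [ffun j => inord (absz (z j + K%:Z))].
pose u : {ffun 'I_d' -> 'I_(2*k).+1} :=
  [ffun j' => inord (absz (w (lift i j') - z (lift i j') + k%:Z))].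
exists k, (zu, (i, (0 <= w i - z i), u)); split => //.
have hzu : zof zu = z.
  apply: funext => j; rewrite /zof ffunE inordK; have := hz j; lia.
rewrite /pt /= hzu; congr pair.
apply: funext => j; rewrite /addZ /vof.
case: unliftP => [j' ->|->].
  rewrite ffunE inordK; have := linf_ge w z (lift i j'); lia.
case: ifP; lia.
Qed.


Lemma l1_ge_term {R : realType} d (z w : Zd d) j :
  (`|z j - w j|%:~R : R) <= l1dist z w.
Proof.
rewrite /l1dist ler_int (bigD1 j) //= lerDl.
by apply: sumr_ge0 => ? _.
Qed.

Lemma l1_pos (R : realType) d' (z w : Zd d'.+1) (m : R) : 0 <= m ->
  ~ inB z m w -> (0:R) < l1dist z w.
Proof.
move=> m0 /negP; rewrite /inB -ltNge => hm.
have [j hj] := linf_attain w z.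
apply: (lt_le_trans _ (@l1_ge_term R _ z w j)).
rewrite hj distrC in hm; lra.
Qed.

Definition bad (R : realType) T d (alpha c1 c2 m N : R)
  (omega : Zd d -> Zd d -> T -> R) (z w : Zd d) : set T :=
  [set t | inB (@zeroZd d) (c2 * N) z /\ ~ inB z m w /\
           Wgt alpha omega z w t < c1 * N].

Lemma bad_eq (R : realType) T d (alpha c1 c2 m N : R)
  (omega : Zd d -> Zd d -> T -> R) (z w : Zd d) :
  inB (@zeroZd d) (c2 * N) z -> ~ inB z m w -> (0:R) < l1dist z w ->
  bad alpha c1 c2 m N omega z w =
  omega z w @^-1` `]-oo, c1 * N * l1dist z w `^ (- alpha)[.
Proof.
move=> h1 h2 l0; rewrite /bad; apply/seteqP; split => t /=; rewrite in_itv /=.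
  move=> [_ [_]]; rewrite /Wgt /rpow ltr_pdivrMr ?powR_gt0 //.
move=> h; split => //; split => //.
by rewrite /Wgt /rpow ltr_pdivrMr ?powR_gt0.
Qed.

Lemma bad_meas (R : realType) dT (T : measurableType dT) (P : probability T R)
  d' (alpha c1 c2 m N : R)
  (omega : Zd d'.+1 -> Zd d'.+1 -> T -> R) (homega : iid_exp1_edges P omega)
  (z w : Zd d'.+1) : 0 <= m ->
  measurable (bad alpha c1 c2 m N omega z w).
Proof.
move=> m0; case: homega => _ hmeas _ _.
case: (pselect (inB (@zeroZd _) (c2 * N) z /\ ~ inB z m w)) => [[h1 h2]|h].
  have zw : z <> w.
    by move=> e; apply: h2; rewrite e /inB (_ : linfdist w w = 0) //;
       apply/eqP; rewrite eq_le linf_ge0 andbT; apply: linf_le => // j;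
       rewrite subrr normr0.
  rewrite bad_eq //; last exact: (l1_pos m0 h2).
  have := hmeas z w zw measurableT _ (measurable_itv `]-oo, c1 * N * l1dist z w `^ (- alpha)[).
  by rewrite setTI.
rewrite (_ : bad _ _ _ _ _ _ _ _ = set0) //.
by apply/seteqP; split => t //= [h1 [h2 _]]; apply: h.
Qed.

Lemma notinB_neq {R : realType} d (z w : Zd d) (m : R) : 0 <= m -> ~ inB z m w -> z <> w.
Proof.
move=> m0 h2 e; apply: h2; rewrite e /inB (_ : linfdist w w = 0) //.
apply/eqP; rewrite eq_le linf_ge0 andbT; apply: linf_le => // j.
by rewrite subrr normr0.
Qed.

Lemma bad_le (R : realType) dT (T : measurableType dT) (P : probability T R)
  d' (alpha c1 c2 m N : R)
  (omega : Zd d'.+1 -> Zd d'.+1 -> T -> R) (homega : iid_exp1_edges P omega)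
  (z w : Zd d'.+1) : 0 <= m -> 0 < c1 * N ->
  (P (bad alpha c1 c2 m N omega z w) <=
     (c1 * N * l1dist z w `^ (- alpha))%:E)%E.
Proof.
move=> m0 hc; case: homega => _ hmeas hdist _.
case: (pselect (inB (@zeroZd _) (c2 * N) z /\ ~ inB z m w)) => [[h1 h2]|h].
  have zw := notinB_neq m0 h2.
  have l0 := l1_pos m0 h2.
  rewrite bad_eq //.
  set a := c1 * N * _.
  have a0 : 0 < a by rewrite /a mulr_gt0 // powR_gt0.
  apply: (@le_trans _ _ (P (omega z w @^-1` `]-oo, a]))).
    apply: le_measure; rewrite ?inE.
    - by have := hmeas z w zw measurableT _ (measurable_itv `]-oo, a[); rewrite setTI.
    - by have := hmeas z w zw measurableT _ (measurable_itv `]-oo, a]); rewrite setTI.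
    - by move=> t /=; rewrite !in_itv /= => /ltW.
  by rewrite hdist //; exact: expo_le.
rewrite (_ : bad _ _ _ _ _ _ _ _ = set0); last first.
  by apply/seteqP; split => t //= [h1 [h2 _]]; apply: h.
by rewrite measure0 lee_fin mulr_ge0 ?powR_ge0 // ltW.
Qed.

Lemma badpt_le (R : realType) dT (T : measurableType dT) (P : probability T R)
  d' (alpha c1 c2 m N : R)
  (omega : Zd d'.+1 -> Zd d'.+1 -> T -> R) (homega : iid_exp1_edges P omega)
  K k (x : Ik d' K k) : 0 < m -> 0 <= alpha -> 0 < c1 * N ->
  (P (bad alpha c1 c2 m N omega (pt x).1 (pt x).2) <=
     (if m < k%:R then c1 * N * k%:R `^ (- alpha) else 0)%:E)%E.
Proof.
move=> m0 a0 hc.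
case: x => zu [[i s] u]; rewrite /pt /=.
set z := zof zu; set v := vof i s u.
have hzw j : z j - addZ z v j = - v j by rewrite /addZ; ring.
have hwz j : addZ z v j - z j = v j by rewrite /addZ; ring.
case: ifP => hk.
  apply: (le_trans (@bad_le R dT T P d' alpha c1 c2 m N omega homega z (addZ z v) (ltW m0) hc)).
  rewrite lee_fin; apply: ler_wpM2l; first exact: ltW.
  apply: powN_anti => //; first lra.
  apply: (le_trans _ (@l1_ge_term R _ z (addZ z v) i)).
  by rewrite hzw normrN /v vof_i.
rewrite (_ : bad _ _ _ _ _ _ _ _ = set0); first by rewrite measure0.
apply/seteqP; split => t //= [_ [h2 _]]; apply: h2.
rewrite /inB.
have : linfdist (addZ z v) z <= k%:Z.
  by apply: linf_le => // j; rewrite hwz vof_le.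
rewrite -(ler_int R) => h; apply: (le_trans h).
by move/negbT: hk; rewrite -leNgt.
Qed.

Lemma core (R : realType) dT (T : measurableType dT) (P : probability T R)
  d' (alpha c1 c2 m N : R)
  (omega : Zd d'.+1 -> Zd d'.+1 -> T -> R) (homega : iid_exp1_edges P omega)
  (B : R) : 0 < m -> 0 <= alpha -> 0 < c1 * N -> 0 <= c2 * N ->
  (forall M, \sum_(k < M) ((#|{: Ik d' (Num.trunc (c2 * N)) k}|)%:R *
      (if m < k%:R then c1 * N * k%:R `^ (- alpha) else 0)) <= B) ->
  ((1 - B)%:E <= P [set t | forall z w : Zd d'.+1,
        inB (@zeroZd d'.+1) (c2 * N) z -> ~ inB z m w ->
        (c1 * N <= Wgt alpha omega z w t)%R])%E.
Proof.
move=> m0 a0 hc hc2 hB.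
set K := Num.trunc (c2 * N).
pose x0 k : Ik d' K k := ([ffun => ord0], (ord0, true, [ffun => ord0])).
pose G k (q : nat) := bad alpha c1 c2 m N omega
   (pt (nth (x0 k) (enum {: Ik d' K k}) q)).1
   (pt (nth (x0 k) (enum {: Ik d' K k}) q)).2.
pose F k := \big[setU/set0]_(q < #|{: Ik d' K k}|) G k q.
have Gm k q : measurable (G k q).
  by apply: (bad_meas alpha c1 c2 N homega); exact: ltW.
have Fm k : measurable (F k) by apply: bigsetU_measurable => q _.
pose U := \bigcup_k F k.
have Um : measurable U by apply: bigcup_measurable => k _.
pose b k := if m < k%:R then c1 * N * k%:R `^ (- alpha) else 0.
have b0 k : 0 <= b k.
  by rewrite /b; case: ifP => // _; rewrite mulr_ge0 ?powR_ge0 // ltW.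
have PF k : (P (F k) <= ((#|{: Ik d' K k}|)%:R * b k)%:E)%E.
  apply: (le_trans (content_subadditive P (fun q _ => Gm k q) (Fm k) (@subset_refl _ _))).
  apply: (@le_trans _ _ (\sum_(q < #|{: Ik d' K k}|) (b k)%:E)%E).
    by apply: lee_sum => q _; apply: badpt_le.
  by rewrite sumEFin sumr_const card_ord mulr_natl.
have PU : (P U <= B%:E)%E.
  apply: (le_trans (measure_sigma_subadditive P Fm Um (@subset_refl _ _))).
  apply: (@le_trans _ _ (\sum_(k <oo) ((#|{: Ik d' K k}|)%:R * b k)%:E)%E).
    apply: lee_nneseries; last by move=> k _; exact: PF.
    by move=> k _ _; exact: measure_ge0.
  apply: lime_le.
    by apply: is_cvg_nneseries => k _ _; rewrite lee_fin mulr_ge0.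
  apply: nearW => M /=; rewrite sumEFin lee_fin big_mkord; exact: hB.
have EU : [set t | forall z w : Zd d'.+1,
        inB (@zeroZd d'.+1) (c2 * N) z -> ~ inB z m w ->
        c1 * N <= Wgt alpha omega z w t] = ~` U.
  apply/seteqP; split => t /=.
    move=> hE [k _]; rewrite /F -bigcup_mkord => -[q _]; rewrite /G.
    move=> [h1 [h2 h3]]; have := hE _ _ h1 h2; lra.
  move=> hU z w h1 h2; rewrite leNgt; apply/negP => h3; apply: hU.
  have hz j : `|z j| <= K%:Z.
    have := linf_ge z (@zeroZd _) j; rewrite /zeroZd subr0 => hj.
    have : ((linfdist z (@zeroZd _))%:~R : R) <= c2 * N := h1.
    have := truncn_itv hc2; rewrite -/K => /andP[_ hK] hl.
    have : (`|z j|%:~R : R) < K.+1%:R.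
      apply: le_lt_trans hK; apply: le_trans hl; rewrite ler_int //.
    change ((`|z j|%:~R : R) < (K.+1%:Z)%:~R -> `|z j| <= K%:Z).
    rewrite ltr_int; lia.
  have [k [x [hx _]]] := @cover_pt d' K z w hz.
  exists k => //; rewrite /F -bigcup_mkord.
  have xin : x \in enum {: Ik d' K k} by rewrite mem_enum.
  exists (index x (enum {: Ik d' K k})).
    by rewrite /= cardE index_mem.
  by rewrite /G nth_index // hx /=; split => //; split.
rewrite EU probability_setC //.
have fU : P U \is a fin_num by apply: fin_num_measure.
rewrite -(fineK fU) in PU *; rewrite lee_fin in PU.
by rewrite -EFinB lee_fin; lra.
Qed.


Lemma partial_bound (R : realType) d' (alpha c1 m N : R) K :
  1 <= m -> 0 <= c1 * N -> d'%:R + 2 <= alpha -> forall M,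
  \sum_(k < M) ((#|{: Ik d' K k}|)%:R *
      (if m < k%:R then c1 * N * k%:R `^ (- alpha) else 0)) <=
  (2 * K + 1)%:R ^+ d'.+1 * (4 * d'.+1%:R) * (c1 * N) * 3 ^+ d' *
     m `^ (d'%:R + 1 - alpha).
Proof.
move=> m1 hc ha M.
set j := Num.trunc m.
have := truncn_itv (le_trans ler01 m1); rewrite -/j => /andP[hj1 hj2].
have j1 : (0 < j)%N.
  rewrite lt0n; apply/eqP => j0; move: hj2; rewrite j0; lra.
have hmj (k : nat) : (m < k%:R) = (j < k)%N.
  apply/idP/idP => h.
    rewrite -(ltr_nat R); lra.
  have : (j.+1%:R : R) <= k%:R by rewrite ler_nat.
  lra.
set Q := (2 * K + 1)%:R ^+ d'.+1 * (2 * d'.+1%:R) * (c1 * N) * 3 ^+ d' *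
     m `^ (d'%:R + 2 - alpha).
have Q0 : 0 <= Q.
  rewrite /Q; apply: mulr_ge0; last exact: powR_ge0.
  apply: mulr_ge0; last exact: exprn_ge0.
  by apply: mulr_ge0.
apply: (@le_trans _ _ (\sum_(k < M) (Q * (if (j < k)%N then ((k%:R : R) ^+ 2)^-1 else 0)))).
  apply: ler_sum => k _; rewrite hmj.
  case: ifP => hk; last by rewrite !mulr0.
  rewrite card_Ik natrM natrM natrM natrX natrX.
  have hk' : m < k%:R by rewrite hmj.
  have := @term_bound R alpha m d' k (lt_le_trans ltr01 m1) hk' ha.
  rewrite /Q (_ : (2 * K).+1 = 2 * K + 1)%N; last by lia.
  rewrite (_ : (2 * k).+1 = 2 * k + 1)%N; last by lia.
  move=> h.
  set A := (2 * K + 1)%:R ^+ d'.+1.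
  have A0 : 0 <= A by rewrite exprn_ge0.
  have -> : A * ((d'.+1)%:R * 2%:R * (2 * k + 1)%:R ^+ d') *
      (c1 * N * k%:R `^ (- alpha)) =
      (A * (2 * d'.+1%:R) * (c1 * N)) * ((2 * k + 1)%:R ^+ d' * k%:R `^ (- alpha)).
    by ring.
  have -> : A * (2 * d'.+1%:R) * (c1 * N) * 3 ^+ d' * m `^ (d'%:R + 2 - alpha) *
     (k%:R ^+ 2)^-1 = (A * (2 * d'.+1%:R) * (c1 * N)) *
     (3 ^+ d' * m `^ (d'%:R + 2 - alpha) * (k%:R ^+ 2)^-1) by ring.
  apply: ler_wpM2l => //; apply: mulr_ge0 => //; apply: mulr_ge0 => //.
rewrite -mulr_sumr.
apply: (@le_trans _ _ (Q * j%:R^-1)).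
  by apply: ler_wpM2l => //; exact: tail_sum.
have m0 : 0 < m by lra.
have hjm : (j%:R : R)^-1 <= 2 / m.
  rewrite -(invf_div m 2) lef_pV2 ?posrE ?ltr0n ?divr_gt0 //.
  have : (1 : R) <= j%:R by rewrite ler1n.
  rewrite -natr1 in hj2; lra.
apply: (le_trans (ler_wpM2l Q0 hjm)).
rewrite /Q.
have -> : m `^ (d'%:R + 2 - alpha) = m `^ (d'%:R + 1 - alpha) * m.
  rewrite -{3}(powRr1 (ltW m0)) -powRD; last by apply/implyP => _; lra.
  by congr (_ `^ _); ring.
rewrite le_eqVlt; apply/orP; left; apply/eqP.
field; lra.
Qed.

Unset Implicit Arguments. Set Strict Implicit.


Theorem lemma8p1 (R : realType) (d : nat) (hd : (1 <= d)%N)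
  (alpha theta c1 c2 : R)
  (halpha : 2 * d%:R + 1 < alpha) (htheta0 : 0 < theta) (htheta1 : theta < 1)
  (hc1 : 0 < c1) (hc2 : 0 < c2)
  (dT : measure_display) (T : measurableType dT) (P : probability T R)
  (omega : Zd d -> Zd d -> T -> R) (homega : iid_exp1_edges P omega) :
  exists C : R, 0 < C /\
    forall n : nat, (1 <= n)%N ->
      ((1 - C * n%:R `^ (d%:R + 1 - theta * (alpha - d%:R)))%:E <=
       P [set t | forall z w : Zd d,
                    inB (@zeroZd d) (c2 * n%:R)%R z ->
                    ~ inB z (n%:R `^ theta)%R w ->
                    (c1 * n%:R <= Wgt alpha omega z w t)%R])%E.
Proof.
case: d hd omega homega halpha => [//|d'] _ omega homega halpha.
have hd0 : (0 : R) <= d'%:R by rewrite ler0n.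
have hdS : (d'.+1%:R : R) = d'%:R + 1 by rewrite -natr1.
rewrite hdS in halpha *.
exists (4 * (d'%:R + 1) * c1 * 3 ^+ d' * (2 * c2 + 1) ^+ d'.+1); split.
  apply: mulr_gt0; last by apply: exprn_gt0; lra.
  apply: mulr_gt0; last by apply: exprn_gt0.
  apply: mulr_gt0 => //; lra.
move=> n hn.
have N1 : (1 : R) <= n%:R by rewrite ler1n.
set N := (n%:R : R) in N1 *.
set m := N `^ theta.
have m1 : 1 <= m.
  by rewrite /m -(powRr0 N) ler_powR //; exact: ltW.
have hc : 0 < c1 * N by apply: mulr_gt0 => //; lra.
have hc2N : 0 <= c2 * N by apply: mulr_ge0; lra.
have := @core R dT T P d' alpha c1 c2 m N omega homega _ (lt_le_trans ltr01 m1)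
  (ltac:(lra)) hc hc2N (@partial_bound R d' alpha c1 m N _ m1 (ltW hc) (ltac:(lra))).
apply: le_trans; rewrite lee_fin lerD2l lerN2.
set K := Num.trunc (c2 * N).
have := truncn_itv hc2N; rewrite -/K => /andP[hK1 _].
have hKN : (2 * K + 1)%:R <= (2 * c2 + 1) * N.
  rewrite natrD natrM; nra.
have hA : (2 * K + 1)%:R ^+ d'.+1 <= (2 * c2 + 1) ^+ d'.+1 * N ^+ d'.+1.
  by rewrite -exprMn; apply: lerXn2r; rewrite ?nnegrE ?ler0n //; nra.
have hpow : m `^ (d'%:R + 1 - alpha) * N * N ^+ d'.+1 =
    N `^ (d'%:R + 1 + 1 - theta * (alpha - (d'%:R + 1))).
  rewrite /m -powRrM -(powR_mulrn d'.+1 (ltW (lt_le_trans ltr01 N1))).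
  rewrite -{2}(powRr1 (ltW (lt_le_trans ltr01 N1))) -!powRD;
    try by apply/implyP => _; lra.
  congr (_ `^ _); rewrite hdS; ring.
rewrite -hpow.
have hcst : 0 <= 4 * (d'%:R + 1) * (c1 * N) * 3 ^+ d'.
  apply: mulr_ge0; last exact: exprn_ge0.
  apply: mulr_ge0; last exact: ltW.
  lra.
apply: (@le_trans _ _ ((2 * c2 + 1) ^+ d'.+1 * N ^+ d'.+1 * (4 * (d'%:R + 1)) * (c1 * N) * 3 ^+ d' *
     m `^ (d'%:R + 1 - alpha))).
  rewrite hdS.
  have hAe : forall A, A * (4 * (d'%:R + 1)) * (c1 * N) * 3 ^+ d' * m `^ (d'%:R + 1 - alpha) =
        (4 * (d'%:R + 1) * (c1 * N) * 3 ^+ d' * m `^ (d'%:R + 1 - alpha)) * A.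
    by move=> A; ring.
  rewrite [leLHS]hAe [leRHS]hAe.
  apply: ler_wpM2l => //.
  by apply: mulr_ge0 => //; exact: powR_ge0.
rewrite le_eqVlt; apply/orP; left; apply/eqP; ring.
Qed.
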